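(* Let $n\ge2$, $D_0>0$ and $\alpha>(n-1)\beta\ge0$, and let $p^a\in\mathbb{R}^n_{\ge0}$. For each fixed payment vector $\bar p^d=(p^d_2,\dots,p^d_n)\in\mathbb{R}^{n-1}$, the collusion game described below has a unique pure-strategy Nash equilibrium. It has the following properties. - The colluding pair's price is $$p_1=p^s_1+p^c_1=-\frac{p^a_1}{2}+\frac{D_0}{2(\alpha-(n-1)\beta)}.$$ - For $i=2,\dots,n$, $p^s_i=g_i-p^d_i$ and $p^c_i=h_i+p^d_i$, where the constants $g_i,h_i$ depend only on $p^a,D_0,\alpha,\beta$. - The equilibrium demand vector, the revenues per unit demand, and hence the total revenues of the colluding pair and of the other CPs, do not depend on $\bar p^d$. Thus the equilibrium is unique up to a free choice of $\bar p^d$.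
   Context: One ISP and $n$ CPs, where CP 1 has an exclusive contract with the ISP. The ISP together with CP 1 forms a single ''colluding pair'' player $\overline{ISP}$, which chooses the vector $$\bar p^s=(p_1,p^s_2,\dots,p^s_n),\qquad p_1=p^s_1+p^c_1,$$ where $p_1$ is the price charged to internauts of CP 1. Each CP $i\ge2$ chooses $p^c_i\in\mathbb{R}$. The payments $p^d_i$ ($i\ge2$) from CP $i$ to the ISP are fixed beforehand by a regulator (ex ante regulation). $p^a_i\ge0$ are advertising revenues per unit demand. With $p_i=p^s_i+p^c_i$ and $D_i=D_0-\alpha p_i+\beta\sum_{j\ne i}p_j$, the payoffs are $$U_{\overline{ISP}}=D_1(p_1+p^a_1)+\sum_{i\ge2}D_i(p^s_i+p^d_i),\qquad U_{CP,i}=D_i(p^c_i+p^a_i-p^d_i)\ \ (i\ge2),$$ and all strategies range over the reals. *)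

(* Defs.v *)
(* Players: index ord0 of 'I_(m.+1) is CP 1 (the colluding
   CP); the other CPs i = 2..n are indexed by j : 'I_m via lift ord0 j.
   Total number of CPs is n = m.+1. *)
From HB Require Import structures.
From mathcomp Require Import all_boot all_order all_algebra.
Set Implicit Arguments. Unset Strict Implicit. Unset Printing Implicit Defensive.
Import Order.TTheory GRing.Theory Num.Theory.
Local Open Scope ring_scope.

Section Game.
Variables (R : realFieldType) (m : nat).

Definition price (p1 : R) (ps pc : 'I_m -> R) (i : 'I_m.+1) : R :=
  match unlift ord0 i with
  | None => p1
  | Some j => ps j + pc j
  end.

Definition demand (D0 alpha beta : R) (p : 'I_m.+1 -> R) (i : 'I_m.+1) : R :=
  D0 - alpha * p i + beta * \sum_(k < m.+1 | k != i) p k.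

Definition U_pair (D0 alpha beta : R) (pa : 'I_m.+1 -> R) (pd : 'I_m -> R)
    (p1 : R) (ps pc : 'I_m -> R) : R :=
  let D := demand D0 alpha beta (price p1 ps pc) in
  D ord0 * (p1 + pa ord0) + \sum_(j < m) D (lift ord0 j) * (ps j + pd j).

(* payoff of CP j (i.e. CP number j+2) *)
Definition U_cp (D0 alpha beta : R) (pa : 'I_m.+1 -> R) (pd : 'I_m -> R)
    (p1 : R) (ps pc : 'I_m -> R) (j : 'I_m) : R :=
  demand D0 alpha beta (price p1 ps pc) (lift ord0 j)
    * (pc j + pa (lift ord0 j) - pd j).

Definition upd (pc : 'I_m -> R) (j : 'I_m) (c : R) : 'I_m -> R :=
  fun k => if k == j then c else pc k.

Definition is_NE (D0 alpha beta : R) (pa : 'I_m.+1 -> R) (pd : 'I_m -> R)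
    (p1 : R) (ps pc : 'I_m -> R) : Prop :=
  (forall (p1' : R) (ps' : 'I_m -> R),
      U_pair D0 alpha beta pa pd p1' ps' pc <= U_pair D0 alpha beta pa pd p1 ps pc)
  /\ (forall (j : 'I_m) (c : R),
      U_cp D0 alpha beta pa pd p1 ps (upd pc j c) j
        <= U_cp D0 alpha beta pa pd p1 ps pc j).

End Game.

(* Main.v *)
Require Import Defs.
From HB Require Import structures.
From mathcomp Require Import all_boot all_order all_algebra.
From mathcomp Require Import ring lra.
Import Order.TTheory GRing.Theory Num.Theory.
Local Open Scope ring_scope.

Lemma lin_sum (R : realFieldType) n (x c : 'I_n -> R) (a b d f : R) :
  \sum_i (a * x i ^+ 2 + b * x i + d * c i + f)
  = a * \sum_i x i ^+ 2 + b * \sum_i x i + d * \sum_i c i + n%:R * f.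
Proof.
by rewrite !big_split /= -!mulr_sumr sumr_const card_ord mulr_natl.
Qed.

Lemma cs_sum (R : realFieldType) n (e : 'I_n -> R) :
  (\sum_i e i) ^+ 2 <= n%:R * \sum_i e i ^+ 2.
Proof.
case: n e => [|n] e.
  by rewrite !big_ord0 expr0n /= mul0r.
set E := \sum_i e i; set S := \sum_i e i ^+ 2.
have h : 0 <= \sum_(i < n.+1) (n.+1%:R * e i - E) ^+ 2 by apply: sumr_ge0 => i _; apply: sqr_ge0.
have eq : \sum_(i < n.+1) (n.+1%:R * e i - E) ^+ 2
   = \sum_(i < n.+1) ((n.+1%:R ^+ 2) * e i ^+ 2 + (- 2 * n.+1%:R * E) * e i + 0 * e i + E ^+ 2)
  by apply: eq_bigr => i _; ring.
rewrite eq lin_sum -/E -/S in h.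
have hn : 0 < n.+1%:R :> R by rewrite ltr0n.
have : 0 <= n.+1%:R * (n.+1%:R * S - E ^+ 2) by move: h; congr (_ <= _); ring.
by rewrite pmulr_rge0 // subr_ge0.
Qed.

Lemma sumsq_eq0 (R : realFieldType) n (e : 'I_n -> R) :
  \sum_i e i ^+ 2 <= 0 -> forall i, e i = 0.
Proof.
move=> h i.
have h0 : \sum_i e i ^+ 2 = 0.
  by apply/eqP; rewrite eq_le h sumr_ge0 // => k _; apply: sqr_ge0.
move/eqP: h0; rewrite psumr_eq0; last by move=> k _; apply: sqr_ge0.
move/allP => /(_ i (mem_index_enum _)) /=.
by rewrite sqrf_eq0 => /eqP.
Qed.

Definition Vf {R : realFieldType} {n} (D0 al be : R) (q c : 'I_n -> R) : R :=
  \sum_i (D0 - (al + be) * q i + be * \sum_k q k) * (q i + c i).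

Lemma pair_quad (R : realFieldType) n (D0 al be K : R) (c q : 'I_n -> R)
  (hK : 2 * K * (al + be - n%:R * be) = D0) :
  Vf D0 al be (fun i => K - c i / 2) c - Vf D0 al be q c
  = (al + be) * \sum_i (q i - (K - c i / 2)) ^+ 2
    - be * (\sum_i (q i - (K - c i / 2))) ^+ 2.
Proof.
set C := \sum_i c i.
pose x := fun i => q i - (K - c i / 2).
set E := \sum_i x i.
have hQs : \sum_i (K - c i / 2) = n%:R * K - C / 2.
  have -> : \sum_i (K - c i / 2) = \sum_i (0 * c i ^+ 2 + 0 * c i + (- 1/2) * c i + K)
    by apply: eq_bigr => i _; ring.
  rewrite lin_sum -/C; ring.
have hQ : \sum_i q i = n%:R * K - C / 2 + E.
  have : E = \sum_i (0 * q i ^+ 2 + 1 * q i + (1/2) * c i + (- K)).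
    by rewrite /E /x; apply: eq_bigr => i _; ring.
  rewrite lin_sum -/C => ->; ring.
rewrite /Vf -sumrB hQs hQ.
pose M := D0 - 2 * (al + be) * K + be * (n%:R * K - C / 2).
have -> : \sum_i ((D0 - (al + be) * (K - c i / 2) + be * (n%:R * K - C / 2)) * (K - c i / 2 + c i) -
    (D0 - (al + be) * q i + be * (n%:R * K - C / 2 + E)) * (q i + c i))
  = \sum_i ((al + be) * x i ^+ 2 + (- (be * E + M)) * x i
           + (- be * E / 2) * c i + (- be * E * K)).
  apply: eq_bigr => i _; by rewrite /M /x; field.
rewrite lin_sum -/C -/E /M -hK; field; done.
Qed.

Lemma pair_bound (R : realFieldType) m (D0 al be K : R) (c q : 'I_m.+1 -> R)
  (hK : 2 * K * (al + be - m.+1%:R * be) = D0) (hb : 0 <= be) :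
  (al - m%:R * be) * \sum_i (q i - (K - c i / 2)) ^+ 2
  <= Vf D0 al be (fun i => K - c i / 2) c - Vf D0 al be q c.
Proof.
rewrite pair_quad //.
set S := \sum_i _ ^+ 2; set E := \sum_i _.
have cs : E ^+ 2 <= m.+1%:R * S by apply: cs_sum.
have : be * E ^+ 2 <= be * (m.+1%:R * S) by apply: ler_wpM2l.
rewrite -natr1 => h.
rewrite -subr_ge0; rewrite -subr_ge0 in h.
by move: h; congr (_ <= _); ring.
Qed.

Lemma cp_opt (R : realFieldType) (al G a d y : R) (ha : 0 < al) :
  (forall x, (G - al * x) * (x + a - d) <= (G - al * y) * (y + a - d))
  <-> G - al * y = al * (y + a - d).
Proof.
split.
- move=> H.
  pose t := (G - al * (a - d) - 2 * al * y) / (2 * al).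
  have hal : al != 0 by rewrite gt_eqF.
  have key : (G - al * (y + t)) * (y + t + a - d) - (G - al * y) * (y + a - d) = al * t ^+ 2.
    by rewrite /t; field.
  have h1 : al * t ^+ 2 <= 0 by rewrite -key subr_le0.
  have h2 : t ^+ 2 <= 0 by rewrite -(pmulr_rle0 _ ha).
  have ht : t = 0.
    by apply/eqP; rewrite -sqrf_eq0 eq_le h2 sqr_ge0.
  have : (G - al * (a - d) - 2 * al * y) = t * (2 * al).
    by rewrite /t mulfVK // mulf_neq0 // pnatr_eq0.
  rewrite ht mul0r => h3.
  by apply/eqP; rewrite -subr_eq0; apply/eqP; rewrite -h3; ring.
- move=> h x.
  rewrite -subr_ge0.
  have -> : (G - al * y) * (y + a - d) - (G - al * x) * (x + a - d)
     = al * (x - y) ^+ 2 - (x - y) * ((G - al * y) - al * (y + a - d)) by ring.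
  by rewrite h subrr mulr0 subr0 mulr_ge0 ?sqr_ge0 // ltW.
Qed.

Definition cvec {R : realFieldType} {m} (pa : 'I_m.+1 -> R) (pd pc : 'I_m -> R) (i : 'I_m.+1) : R :=
  match unlift ord0 i with None => pa ord0 | Some j => pd j - pc j end.

Lemma cvec0 (R : realFieldType) m (pa : 'I_m.+1 -> R) pd pc : cvec pa pd pc ord0 = pa ord0.
Proof. by rewrite /cvec unlift_none. Qed.
Lemma cvecS (R : realFieldType) m (pa : 'I_m.+1 -> R) pd pc j : cvec pa pd pc (lift ord0 j) = pd j - pc j.
Proof. by rewrite /cvec liftK. Qed.
Lemma price0 (R : realFieldType) m (p1 : R) (ps pc : 'I_m -> R) : price p1 ps pc ord0 = p1.
Proof. by rewrite /price unlift_none. Qed.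
Lemma priceS (R : realFieldType) m (p1 : R) (ps pc : 'I_m -> R) j : price p1 ps pc (lift ord0 j) = ps j + pc j.
Proof. by rewrite /price liftK. Qed.

Lemma demandE (R : realFieldType) m (D0 al be : R) (p : 'I_m.+1 -> R) i :
  demand D0 al be p i = D0 - (al + be) * p i + be * \sum_k p k.
Proof. by rewrite /demand [\sum_k p k](bigD1 i) //=; ring. Qed.

Lemma sum_price (R : realFieldType) m (p1 : R) (ps pc : 'I_m -> R) :
  \sum_k price p1 ps pc k = p1 + \sum_j (ps j + pc j).
Proof.
rewrite big_ord_recl price0; congr (_ + _); apply: eq_bigr => j _; exact: priceS.
Qed.

Lemma Vf_ext (R : realFieldType) n (D0 al be : R) (q q' c c' : 'I_n -> R) :
  (forall i, q i = q' i) -> (forall i, c i = c' i) -> Vf D0 al be q c = Vf D0 al be q' c'.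
Proof.
move=> hq hc; rewrite /Vf (eq_bigr _ (fun k _ => hq k)).
by apply: eq_bigr => i _; rewrite hq hc.
Qed.

Lemma UpairE (R : realFieldType) m (D0 al be : R) pa pd p1 (ps pc : 'I_m -> R) :
  U_pair D0 al be pa pd p1 ps pc = Vf D0 al be (price p1 ps pc) (cvec pa pd pc).
Proof.
rewrite /U_pair /Vf big_ord_recl demandE price0 cvec0; congr (_ + _).
by apply: eq_bigr => j _; rewrite demandE priceS cvecS; congr (_ * _); ring.
Qed.

Lemma cp_iff (R : realFieldType) m (D0 al be : R) pa pd p1 (ps pc : 'I_m -> R) j
  (ha : 0 < al) :
  (forall x, U_cp D0 al be pa pd p1 ps (upd pc j x) j <= U_cp D0 al be pa pd p1 ps pc j)
  <-> demand D0 al be (price p1 ps pc) (lift ord0 j)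
      = al * (pc j + pa (lift ord0 j) - pd j).
Proof.
pose G := D0 - al * ps j + be * \sum_(k < m.+1 | k != lift ord0 j) price p1 ps pc k.
have hupd : forall x, U_cp D0 al be pa pd p1 ps (upd pc j x) j
    = (G - al * x) * (x + pa (lift ord0 j) - pd j).
  move=> x; rewrite /U_cp /demand priceS {1 3}/upd eqxx /G.
  have -> : \sum_(k < m.+1 | k != lift ord0 j) price p1 ps (upd pc j x) k
       = \sum_(k < m.+1 | k != lift ord0 j) price p1 ps pc k.
    apply: eq_bigr => k; case: (unliftP ord0 k) => [k'|] -> hk; rewrite ?price0 ?priceS //.
    rewrite /upd ifF //; apply/negbTE; apply: contra hk => /eqP ->; exact: eqxx.
  ring.
have hself : demand D0 al be (price p1 ps pc) (lift ord0 j) = G - al * pc j.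
  by rewrite /demand priceS /G; ring.
have hs : U_cp D0 al be pa pd p1 ps pc j = (G - al * pc j) * (pc j + pa (lift ord0 j) - pd j).
  by rewrite /U_cp hself.
rewrite hs hself; split.
- move=> H; apply/cp_opt => // x; have := H x; by rewrite hupd.
- move=> H x; rewrite hupd; move: x; exact/cp_opt.
Qed.

Lemma lin_eq (R : realFieldType) (k u v x y : R) :
  x - y = k * (u - v) -> u = v -> x = y.
Proof. by move=> h e; apply/eqP; rewrite -subr_eq0 h e subrr mulr0. Qed.

Theorem theorem5 (R : realFieldType) (m : nat) (hm : (1 <= m)%N)
    (D0 alpha beta : R) (pa : 'I_m.+1 -> R)
    (hD0 : 0 < D0) (hb : 0 <= beta) (hab : m%:R * beta < alpha)
    (hpa : forall i, 0 <= pa i) :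
  exists g h : 'I_m -> R,
    (forall pd : 'I_m -> R,
      (* existence *)
      (exists (p1 : R) (ps pc : 'I_m -> R), is_NE D0 alpha beta pa pd p1 ps pc)
      (* uniqueness *)
      /\ (forall (p1 p1' : R) (ps pc ps' pc' : 'I_m -> R),
            is_NE D0 alpha beta pa pd p1 ps pc ->
            is_NE D0 alpha beta pa pd p1' ps' pc' ->
            p1 = p1' /\ (forall j, ps j = ps' j /\ pc j = pc' j))
      (* explicit form *)
      /\ (forall (p1 : R) (ps pc : 'I_m -> R),
            is_NE D0 alpha beta pa pd p1 ps pc ->
            p1 = - pa ord0 / 2 + D0 / (2 * (alpha - m%:R * beta))
            /\ (forall j, ps j = g j - pd j /\ pc j = h j + pd j)))
    (* demands, per-unit revenues and total revenues independent of pd *)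
    /\ (forall (pd pd' : 'I_m -> R) (p1 p1' : R) (ps pc ps' pc' : 'I_m -> R),
          is_NE D0 alpha beta pa pd p1 ps pc ->
          is_NE D0 alpha beta pa pd' p1' ps' pc' ->
          (forall i, demand D0 alpha beta (price p1 ps pc) i
                     = demand D0 alpha beta (price p1' ps' pc') i)
          /\ p1 + pa ord0 = p1' + pa ord0
          /\ (forall j, ps j + pd j = ps' j + pd' j
                /\ pc j + pa (lift ord0 j) - pd j = pc' j + pa (lift ord0 j) - pd' j)
          /\ U_pair D0 alpha beta pa pd p1 ps pc = U_pair D0 alpha beta pa pd' p1' ps' pc'
          /\ (forall j, U_cp D0 alpha beta pa pd p1 ps pc j
                        = U_cp D0 alpha beta pa pd' p1' ps' pc' j)).
Proof.
have hX : 0 <= m%:R * beta by rewrite mulr_ge0.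
have ha : 0 < alpha by lra.
have hd : 0 < alpha - m%:R * beta by lra.
have hdn : alpha - m%:R * beta != 0 by rewrite gt_eqF.
pose K := D0 / (2 * (alpha - m%:R * beta)).
have hK : 2 * K * (alpha + beta - m.+1%:R * beta) = D0.
  by rewrite /K -natr1; field.
pose bv j := D0 - beta * pa ord0 - 2 * alpha * pa (lift ord0 j).
have h3 : 0 < 3 * alpha + beta - m%:R * beta by lra.
have h3' : 0 < 3 * alpha + beta by lra.
have h3n : 3 * alpha + beta - m%:R * beta != 0 by rewrite gt_eqF.
have h3n' : 3 * alpha + beta != 0 by rewrite gt_eqF.
pose Rs := (\sum_j bv j) / (3 * alpha + beta - m%:R * beta).
pose rs j := (bv j + beta * Rs) / (3 * alpha + beta).
have sum_rs : \sum_j rs j = Rs.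
  have -> : \sum_j rs j = \sum_j (0 * bv j ^+ 2 + (1 / (3 * alpha + beta)) * bv j + 0 * bv j
                                   + beta * Rs / (3 * alpha + beta)).
    by apply: eq_bigr => j _; rewrite /rs; field.
  rewrite lin_sum.
  have hs : \sum_j bv j = Rs * (3 * alpha + beta - m%:R * beta) by rewrite /Rs mulfVK.
  by rewrite hs; field.
have dform : forall pd p1 (ps pc : 'I_m -> R), p1 = K - pa ord0 / 2 ->
    (forall j, ps j + pc j = K + (pc j - pd j) / 2) -> forall j,
    demand D0 alpha beta (price p1 ps pc) (lift ord0 j)
    = D0 - (alpha + beta) * (K + (pc j - pd j) / 2)
      + beta * (m.+1%:R * K - pa ord0 / 2 + (\sum_k (pc k - pd k)) / 2).
  move=> pd p1 ps pc hp hps j.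
  rewrite demandE sum_price priceS hps hp (eq_bigr _ (fun j _ => hps j)).
  rewrite big_split /= sumr_const card_ord -mulr_suml -mulr_natl -natr1; ring.
have char : forall pd p1 (ps pc : 'I_m -> R), is_NE D0 alpha beta pa pd p1 ps pc <->
    (p1 = K - pa ord0 / 2 /\ forall j, ps j = K - rs j / 2 - pd j /\ pc j = rs j + pd j).
  move=> pd p1 ps pc; split.
  - move=> [Hp Hc].
    set c := cvec pa pd pc.
    have Hdev := Hp (K - c ord0 / 2) (fun j => K - c (lift ord0 j) / 2 - pc j).
    rewrite !UpairE -/c in Hdev.
    have e1 : Vf D0 alpha beta (price (K - c ord0 / 2) (fun j => K - c (lift ord0 j) / 2 - pc j) pc) c
              = Vf D0 alpha beta (fun i => K - c i / 2) c.
      apply: Vf_ext => // i; case: (unliftP ord0 i) => [j|] ->; rewrite ?price0 ?priceS //.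
      ring.
    rewrite e1 in Hdev.
    have pb := @pair_bound _ _ _ _ _ _ c (price p1 ps pc) hK hb.
    have hS : \sum_i (price p1 ps pc i - (K - c i / 2)) ^+ 2 <= 0.
      rewrite -(pmulr_rle0 _ hd); apply: le_trans pb _; rewrite subr_le0; exact: Hdev.
    have he : forall i, price p1 ps pc i = K - c i / 2.
      by move=> i; apply/eqP; rewrite -subr_eq0; apply/eqP; exact: (@sumsq_eq0 _ _ (fun i => price p1 ps pc i - (K - c i / 2)) hS i).
    have hp1 : p1 = K - pa ord0 / 2 by have := he ord0; rewrite price0 /c cvec0.
    have hps : forall j, ps j + pc j = K + (pc j - pd j) / 2.
      by move=> j; have := he (lift ord0 j); rewrite priceS /c cvecS => ->; field.
    have hr : forall j, (3 * alpha + beta) * (pc j - pd j) - beta * \sum_k (pc k - pd k) = bv j.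
      move=> j; have := (@cp_iff _ _ D0 alpha beta pa pd p1 ps pc j ha).1 (Hc j).
      rewrite (dform pd p1 ps pc hp1 hps j) /bv -!hK -natr1 => h.
      by apply: (@lin_eq _ (-2) _ _ _ _ _ h); field.
    have hR : \sum_k (pc k - pd k) = Rs.
      have : \sum_j ((3 * alpha + beta) * (pc j - pd j) - beta * \sum_k (pc k - pd k))
             = \sum_j bv j by apply: eq_bigr => j _; exact: hr.
      rewrite sumrB -mulr_sumr sumr_const card_ord -mulr_natl => hsum.
      by rewrite /Rs -hsum; field.
    have hrj : forall j, pc j - pd j = rs j.
      by move=> j; rewrite /rs -(hr j) hR; field.
    split => // j; have := hrj j; have := hps j; lra.
  - move=> [hp1 hj]; split.
    + move=> p1' ps'; rewrite !UpairE.
      set c := cvec pa pd pc.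
      have e1 : Vf D0 alpha beta (price p1 ps pc) c = Vf D0 alpha beta (fun i => K - c i / 2) c.
        apply: Vf_ext => // i; case: (unliftP ord0 i) => [j|] ->;
          rewrite ?price0 ?priceS /c ?cvec0 ?cvecS //.
        have := hj j; lra.
      rewrite e1 -subr_ge0; apply: le_trans (@pair_bound _ _ _ _ _ _ c (price p1' ps' pc) hK hb).
      by apply: mulr_ge0; [exact: ltW | apply: sumr_ge0 => i _; exact: sqr_ge0].
    + move=> j; apply/(@cp_iff _ _ D0 alpha beta pa pd p1 ps pc j ha).
      have hps : forall j, ps j + pc j = K + (pc j - pd j) / 2.
        by move=> k; have := hj k; lra.
      rewrite (dform pd p1 ps pc hp1 hps j).
      have -> : \sum_k (pc k - pd k) = Rs.
        rewrite -sum_rs; apply: eq_bigr => k _; have := hj k; lra.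
      have hrs : (3 * alpha + beta) * rs j = bv j + beta * Rs by rewrite /rs mulrC mulfVK.
      move: hrs; rewrite /bv -!hK -natr1 => hrs.
      rewrite (hj j).2; by apply: (@lin_eq _ (-1/2) _ _ _ _ _ hrs); field.
exists (fun j => K - rs j / 2), (fun j => rs j).
split.
- move=> pd; split; [|split].
  + exists (K - pa ord0 / 2), (fun j => K - rs j / 2 - pd j), (fun j => rs j + pd j).
    by apply/char; split.
  + move=> p1 p1' ps pc ps' pc' /char [h1 hj] /char [h1' hj'].
    split; first by rewrite h1 h1'.
    by move=> j; rewrite (hj j).1 (hj j).2 (hj' j).1 (hj' j).2.
  + move=> p1 ps pc /char [h1 hj]; split => //.
    by rewrite h1 /K addrC mulNr.
- move=> pd pd' p1 p1' ps pc ps' pc' /char [h1 hj] /char [h1' hj'].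
  have hpr : forall i, price p1 ps pc i = price p1' ps' pc' i.
    move=> i; case: (unliftP ord0 i) => [j|] ->; rewrite ?price0 ?priceS ?h1 ?h1' //.
    rewrite (hj j).1 (hj j).2 (hj' j).1 (hj' j).2; ring.
  have hdem : forall i, demand D0 alpha beta (price p1 ps pc) i
                      = demand D0 alpha beta (price p1' ps' pc') i.
    by move=> i; rewrite !demandE (eq_bigr _ (fun k _ => hpr k)) hpr.
  have hrev : forall j, ps j + pd j = ps' j + pd' j
        /\ pc j + pa (lift ord0 j) - pd j = pc' j + pa (lift ord0 j) - pd' j.
    by move=> j; rewrite (hj j).1 (hj j).2 (hj' j).1 (hj' j).2; split; ring.
  split => //; split; first by rewrite h1 h1'.
  split => //; split.
  + rewrite /U_pair /=; congr (_ + _); first by rewrite hdem h1 h1'.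
    by apply: eq_bigr => j _; rewrite hdem (hrev j).1.
  + by move=> j; rewrite /U_cp hdem (hrev j).2.
Qed.
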